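(* Let $\mathcal{H}=(\mathcal{V},\mathcal{E})$ be a connected Sperner hypergraph with $|\mathcal{E}|\ge 2$. (i) If $F(\mathcal{H})\neq\emptyset$, then $(\lambda-1)^2$ divides $P(\mathcal{H},\lambda)$ if and only if $|F(\mathcal{H})|=1$. (ii) Suppose $F(\mathcal{H})=\emptyset$ and there are a vertex $w$ and two proper subsets $\mathcal{V}_1,\mathcal{V}_2$ of $\mathcal{V}$ with $\mathcal{V}_1\cup\mathcal{V}_2=\mathcal{V}$, $\mathcal{V}_1\cap\mathcal{V}_2=\{w\}$, and such that every $e\in\mathcal{E}$ satisfies $w\in e$ or $e\subseteq\mathcal{V}_i$ for some $i\in\{1,2\}$. Then $(\lambda-1)^2$ divides $P(\mathcal{H},\lambda)$ if and only if one of the following holds: (a) $\mathcal{V}_1\notin\mathcal{I}(\mathcal{H})$ and $\mathcal{V}_2\notin\mathcal{I}(\mathcal{H})$; (b) for some $i\in\{1,2\}$, $\mathcal{V}_i\in\mathcal{I}(\mathcal{H})$, $\mathcal{V}_{3-i}\notin\mathcal{I}(\mathcal{H})$, and $(\lambda-1)^2$ divides $P(\mathcal{H}\cdot\mathcal{V}_i,\lambda)$.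
   Context: A hypergraph $\mathcal{H}=(\mathcal{V},\mathcal{E})$ consists of a finite vertex set $\mathcal{V}$ and a set $\mathcal{E}$ of subsets of $\mathcal{V}$, each of size at least $1$, called edges. For a positive integer $\lambda$, a weak proper $\lambda$-colouring of $\mathcal{H}$ is a map $\phi:\mathcal{V}\to\{1,\dots,\lambda\}$ such that $|\{\phi(v):v\in e\}|>1$ for every $e\in\mathcal{E}$. $P(\mathcal{H},\lambda)$ denotes the number of weak proper $\lambda$-colourings; it is a polynomial in $\lambda$. $\mathcal{H}$ is connected if for any two vertices $v_1,v_2$ there is a sequence of edges $e_0,\dots,e_k$ with $v_1\in e_0$, $v_2\in e_k$, $e_i\cap e_{i+1}\ne\emptyset$. $\mathcal{H}$ is Sperner if $e_1\not\subseteq e_2$ for all distinct edges $e_1,e_2$. $F(\mathcal{H})$ is the set of vertices lying in every edge of $\mathcal{H}$. For $\mathcal{V}_0\subseteq\mathcal{V}$, $\mathcal{H}[\mathcal{V}_0]$ is the hypergraph with vertex set $\mathcal{V}_0$ and edge set $\{e\in\mathcal{E}:e\subseteq\mathcal{V}_0\}$, and $\mathcal{I}(\mathcal{H})$ is the set of subsets $\mathcal{V}_0\subseteq\mathcal{V}$ such that $\mathcal{H}[\mathcal{V}_0]$ has no edges. $\mathcal{H}\cdot\mathcal{V}_0$ is obtained by identifying all vertices of $\mathcal{V}_0$ into one new vertex $w'$: its vertex set is $(\mathcal{V}\setminus\mathcal{V}_0)\cup\{w'\}$ and its edge set is $\{e\in\mathcal{E}:e\cap\mathcal{V}_0=\emptyset\}\cup\{(e\setminus\mathcal{V}_0)\cup\{w'\}:e\cap\mathcal{V}_0\ne\emptyset\}$.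 *)

(* Defs.v *)
From HB Require Import structures.
From mathcomp Require Import all_boot all_order all_algebra.
Set Implicit Arguments. Unset Strict Implicit. Unset Printing Implicit Defensive.
Import Order.TTheory GRing.Theory Num.Theory.
Local Open Scope ring_scope.

Definition hypergraph (T : finType) (V : {set T}) (E : {set {set T}}) : Prop :=
  forall e, e \in E -> e \subset V /\ e != set0.

Definition hconnected (T : finType) (V : {set T}) (E : {set {set T}}) : Prop :=
  forall v1 v2, v1 \in V -> v2 \in V ->
    exists (e0 : {set T}) (s : seq {set T}),
      [/\ all (fun e => e \in E) (e0 :: s), v1 \in e0, v2 \in last e0 s
        & path (fun a b : {set T} => a :&: b != set0) e0 s].

Definition sperner (T : finType) (E : {set {set T}}) : Prop :=
  forall e1 e2, e1 \in E -> e2 \in E -> e1 != e2 -> ~~ (e1 \subset e2).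

Definition Fcore (T : finType) (V : {set T}) (E : {set {set T}}) : {set T} :=
  [set v in V | [forall e in E, v \in e]].

Definition indep (T : finType) (V : {set T}) (E : {set {set T}}) (V0 : {set T}) : bool :=
  (V0 \subset V) && [forall e in E, ~~ (e \subset V0)].

Definition weak_proper (T : finType) (V : {set T}) (E : {set {set T}}) (l : nat)
  (f : {ffun {x : T | x \in V} -> 'I_l}) : bool :=
  [forall e in E, exists x : {x : T | x \in V}, exists y : {x : T | x \in V},
     [&& val x \in e, val y \in e & f x != f y]].

Definition chrom_count (T : finType) (V : {set T}) (E : {set {set T}}) (l : nat) : nat :=
  #|[set f : {ffun {x : T | x \in V} -> 'I_l} | weak_proper E f]|.

Definition is_chrom_poly (T : finType) (V : {set T}) (E : {set {set T}})
  (p : {poly int}) : Prop :=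
  forall l : nat, (0 < l)%N -> (p.[l%:R] = (chrom_count V E l)%:R)%R.

(* H . V0 : identify V0 into a new vertex w' (= None on the type option T). *)
Definition contr_V (T : finType) (V V0 : {set T}) : {set option T} :=
  None |: [set Some x | x in V :\: V0].

Definition contr_E (T : finType) (E : {set {set T}}) (V0 : {set T}) : {set {set option T}} :=
  [set (if e :&: V0 == set0 then [set Some x | x in e]
        else None |: [set Some x | x in e :\: V0]) | e in E].

(* Main.v *)
Require Import Defs.
From HB Require Import structures.
From mathcomp Require Import all_boot all_order all_algebra.
From mathcomp Require Import zify.
Set Implicit Arguments. Unset Strict Implicit. Unset Printing Implicit Defensive.
Import Order.TTheory GRing.Theory Num.Theory.

Definition nonmono (U : finType) n (f : {ffun U -> 'I_n}) (e : {set U}) : bool :=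
  [exists x in e, exists y in e, f x != f y].
Definition pT (U : finType) n (E : {set {set U}}) (f : {ffun U -> 'I_n}) : bool :=
  [forall e in E, nonmono f e].
Definition fillb (U : finType) n (V : {set U}) (b : U) (f : {ffun U -> 'I_n}) : bool :=
  [forall x, (x \notin V) ==> (f x == f b)].

Lemma card_bij_in (aT rT : finType) (A : {set aT}) (B : {set rT}) (g : aT -> rT) (h : rT -> aT) :
  {in A, forall x, g x \in B} -> {in B, forall y, h y \in A} ->
  {in A, cancel g h} -> {in B, cancel h g} -> #|A| = #|B|.
Proof.
move=> gAB hBA gK hK.
rewrite -(card_in_imset (can_in_inj gK)).
suff -> : [set g x | x in A] = B by [].
apply/setP => y; apply/imsetP/idP => [[x xA ->]|yB]; first exact: gAB.
by exists (h y); [exact: hBA | rewrite hK].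
Qed.

Lemma NM (U1 U2 : finType) n (f : {ffun U1 -> 'I_n}) (g : {ffun U2 -> 'I_n}) (e : {set U1}) (e' : {set U2}) :
  (forall x, x \in e -> exists2 a, a \in e' & g a = f x) ->
  (forall a, a \in e' -> exists2 x, x \in e & f x = g a) ->
  nonmono f e = nonmono g e'.
Proof.
move=> H1 H2; apply/idP/idP.
  case/exists_inP => x xe /exists_inP [y ye nxy].
  have [a ae ga] := H1 x xe; have [b be gb] := H1 y ye.
  by apply/exists_inP; exists a => //; apply/exists_inP; exists b => //; rewrite ga gb.
case/exists_inP => x xe /exists_inP [y ye nxy].
have [a ae ga] := H2 x xe; have [b be gb] := H2 y ye.
by apply/exists_inP; exists a => //; apply/exists_inP; exists b => //; rewrite ga gb.
Qed.

Lemma NMperm (U : finType) n (f g : {ffun U -> 'I_n}) (e : {set U}) :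
  {in e &, forall x y, (g x == g y) = (f x == f y)} -> nonmono g e = nonmono f e.
Proof.
move=> H; apply/idP/idP; case/exists_inP => x xe /exists_inP [y ye nxy];
 apply/exists_inP; exists x => //; apply/exists_inP; exists y => //; by rewrite ?H // -?H.
Qed.

Lemma NMz (U : finType) n (f : {ffun U -> 'I_n}) (e : {set U}) z : z \in e ->
  nonmono f e = [exists y in e, f y != f z].
Proof.
move=> ze; apply/idP/idP.
  case/exists_inP => x xe /exists_inP [y ye nxy].
  apply/exists_inP; case: (eqVneq (f x) (f z)) => [fx|fx]; last by exists x.
  by exists y => //; rewrite -fx eq_sym.
case/exists_inP => y ye nyz; apply/exists_inP; exists y => //; apply/exists_inP; by exists z.
Qed.

Lemma C0 (T : finType) (V : {set T}) (E : {set {set T}}) (b : T) (l : nat) :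
  b \in V -> (forall e, e \in E -> e \subset V) ->
  chrom_count V E l = #|[set f : {ffun T -> 'I_l} | fillb V b f && pT E f]|.
Proof.
move=> bV EV; rewrite /chrom_count.
pose b' : {x : T | x \in V} := exist _ b bV.
pose ext (g : {ffun {x : T | x \in V} -> 'I_l}) := [ffun x => g (insubd b' x)] : {ffun T -> 'I_l}.
pose res (f : {ffun T -> 'I_l}) := [ffun y : {x : T | x \in V} => f (val y)].
have insb : forall x, x \in V -> val (insubd b' x) = x by move=> x xV; rewrite insubdK.
have insn : forall x, x \notin V -> insubd b' x = b' by move=> x xV; rewrite /insubd insubN.
have insbb : insubd b' b = b' by apply: val_inj; rewrite insb.
apply: (card_bij_in (g := ext) (h := res)).
- move=> g; rewrite !inE => wp; apply/andP; split.
    by apply/forallP => x; apply/implyP => xV; rewrite !ffunE insn // insbb.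
  apply/forall_inP => e eE; have := forall_inP wp e eE.
  case/existsP => x /existsP [y /and3P [xe ye nxy]].
  apply/exists_inP; exists (val x) => //; apply/exists_inP; exists (val y) => //.
  by rewrite !ffunE !valKd.
- move=> f; rewrite !inE => /andP [fl pf]; apply/forall_inP => e eE.
  have /exists_inP [x xe /exists_inP [y ye nxy]] := forall_inP pf e eE.
  have xV := subsetP (EV e eE) x xe; have yV := subsetP (EV e eE) y ye.
  apply/existsP; exists (insubd b' x); apply/existsP; exists (insubd b' y).
  by rewrite !ffunE !insb ?xe ?ye.
- by move=> g _; apply/ffunP => y; rewrite !ffunE valKd.
- move=> f; rewrite inE => /andP [fl _]; apply/ffunP => x; rewrite !ffunE.
  case: (boolP (x \in V)) => xV; first by rewrite insb.
  by rewrite insn //= (eqP (implyP (forallP fl x) xV)).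
Qed.

Lemma NMce (T : finType) n (V0 e : {set T}) (f : {ffun T -> 'I_n}) (g : {ffun option T -> 'I_n}) :
  (forall x, x \in e -> f x = if x \in V0 then g None else g (Some x)) ->
  nonmono f e = nonmono g (if e :&: V0 == set0 then [set Some x | x in e]
        else None |: [set Some x | x in e :\: V0]).
Proof.
move=> rel; case: eqP => [e0|/eqP e0].
  apply: NM.
    move=> x xe; exists (Some x); first by apply/imsetP; exists x.
    rewrite rel //; case: ifP => // xV0.
    suff : x \in (set0 : {set T}) by rewrite inE.
    by rewrite -e0 inE xe xV0.
  move=> a /imsetP [x xe ->]; exists x => //; rewrite rel //; case: ifP => // xV0.
  suff : x \in (set0 : {set T}) by rewrite inE.
  by rewrite -e0 inE xe xV0.
have [z] := set0Pn _ e0; rewrite inE => /andP [ze zV0].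
apply: NM.
  move=> x xe; case: (boolP (x \in V0)) => xV0.
    by exists None; [rewrite setU11 | rewrite rel // xV0].
  exists (Some x); last by rewrite rel // (negPf xV0).
  by rewrite inE; apply/orP; right; apply/imsetP; exists x => //; rewrite inE xV0.
move=> a; rewrite in_setU in_set1 => /orP [/eqP ->|/imsetP [x]].
  by exists z => //; rewrite rel // zV0.
rewrite inE => /andP [xV0 xe] ->; exists x => //; by rewrite rel // (negPf xV0).
Qed.

Lemma pT_contr (T : finType) n (V V0 : {set T}) (E : {set {set T}})
  (f : {ffun T -> 'I_n}) (g : {ffun option T -> 'I_n}) :
  (forall e, e \in E -> e \subset V) ->
  (forall x, x \in V -> f x = if x \in V0 then g None else g (Some x)) ->
  pT E f = pT (contr_E E V0) g.
Proof.
move=> EV rel.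
have H : forall e, e \in E -> nonmono f e = nonmono g (if e :&: V0 == set0 then [set Some x | x in e]
        else None |: [set Some x | x in e :\: V0]).
  by move=> e eE; apply: NMce => x xe; apply: rel; apply: (subsetP (EV e eE)).
apply/forall_inP/forall_inP.
  by move=> Hf e' /imsetP [e eE ->]; rewrite -H //; apply: Hf.
by move=> Hg e eE; rewrite H //; apply: Hg; apply/imsetP; exists e.
Qed.

Lemma memSome (T : finType) (V V0 : {set T}) x :
  (Some x \in contr_V V V0) = (x \in V) && (x \notin V0).
Proof.
by rewrite /contr_V in_setU in_set1 /= mem_imset; [rewrite inE andbC | move=> a b []].
Qed.

Lemma Ccontr (T : finType) (V V0 : {set T}) (E : {set {set T}}) (w : T) (l : nat) :
  w \in V0 -> V0 \subset V -> (forall e, e \in E -> e \subset V) ->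
  chrom_count (contr_V V V0) (contr_E E V0) l =
  #|[set f : {ffun T -> 'I_l} | [&& fillb V w f, pT E f & [forall x in V0, f x == f w]]]|.
Proof.
move=> wV0 V0V EV.
have NV : None \in contr_V V V0 by rewrite /contr_V setU11.
have cEV : forall e, e \in contr_E E V0 -> e \subset contr_V V V0.
  move=> e' /imsetP [e eE ->]; apply/subsetP => a.
  case: ifP => [/eqP e0|_].
    move=> /imsetP [x xe ->]; rewrite memSome (subsetP (EV e eE)) //=.
    apply/negP => xV0; suff : x \in (set0 : {set T}) by rewrite inE.
    by rewrite -e0 inE xe xV0.
  rewrite in_setU in_set1 => /orP [/eqP -> //|/imsetP [x]].
  rewrite inE => /andP [xV0 xe] ->; by rewrite memSome xV0 (subsetP (EV e eE)).
rewrite (@C0 _ _ _ _ l NV cEV).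
pose gam (g : {ffun option T -> 'I_l}) :=
  [ffun x => if (x \in V) && (x \notin V0) then g (Some x) else g None] : {ffun T -> 'I_l}.
pose del (f : {ffun T -> 'I_l}) :=
  [ffun o => if o is Some x then (if (x \in V) && (x \notin V0) then f x else f w) else f w]
   : {ffun option T -> 'I_l}.
have wV : w \in V := subsetP V0V w wV0.
apply: (card_bij_in (g := gam) (h := del)).
- move=> g; rewrite !inE => /andP [fl pg]; apply/and3P; split.
  + apply/forallP => x; apply/implyP => xV; by rewrite !ffunE (negPf xV) wV0 /= andbF eqxx.
  + rewrite (@pT_contr _ _ V V0 E (gam g) g EV) // => x xV; rewrite ffunE xV /=.
    by case: (x \in V0).
  + apply/forall_inP => x xV0; by rewrite !ffunE xV0 wV0 !andbF.
- move=> f; rewrite !inE => /and3P [fl pf cf]; apply/andP; split.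
  + apply/forallP => o; apply/implyP; case: o => [x|]; last by rewrite NV.
    by rewrite memSome !ffunE => /negPf ->.
  + rewrite -(@pT_contr _ _ V V0 E f (del f) EV) // => x xV; rewrite !ffunE.
    case: (boolP (x \in V0)) => /= xV0; first by rewrite (eqP (forall_inP cf x xV0)).
    by rewrite xV.
- move=> g; rewrite inE => /andP [fl _]; apply/ffunP => o; rewrite !ffunE.
  case: o => [x|]; last by rewrite wV0 andbF.
  case: ifP => xin; first by rewrite ffunE xin.
  by rewrite wV0 andbF; apply/esym/eqP; apply: (implyP (forallP fl (Some x))); rewrite memSome xin.
- move=> f; rewrite inE => /and3P [fl pf cf]; apply/ffunP => x; rewrite !ffunE.
  case: ifP => xin; first by rewrite xin.
  case: (boolP (x \in V)) => xV.
    have xV0 : x \in V0 by move: xin; rewrite xV /= => /negbFE.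
    by rewrite (eqP (forall_inP cf x xV0)).
  by rewrite (eqP (implyP (forallP fl x) xV)).
Qed.

Definition swp n (a b c : 'I_n) : 'I_n := if c == a then b else if c == b then a else c.

Lemma swpK n (a b : 'I_n) : involutive (swp a b).
Proof.
move=> c; rewrite /swp.
case: (eqVneq c a) => [->|ca]; first by rewrite eqxx; case: (eqVneq b a).
case: (eqVneq c b) => [->|cb]; first by rewrite eqxx.
by rewrite (negPf ca) (negPf cb).
Qed.

Lemma swp_eq n (a b x y : 'I_n) : (swp a b x == swp a b y) = (x == y).
Proof. exact: (inj_eq (can_inj (swpK a b))). Qed.

Lemma swpL n (a b : 'I_n) : swp a b a = b.
Proof. by rewrite /swp eqxx. Qed.
Lemma swpR n (a b : 'I_n) : swp a b b = a.
Proof. by rewrite /swp eqxx; case: eqP => // ->. Qed.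
Lemma swp_fix n (a b c : 'I_n) : c != a -> c != b -> swp a b c = c.
Proof. by rewrite /swp => /negPf -> /negPf ->. Qed.

Definition phi (T : finType) n (R : {set T}) (a b : 'I_n) (f : {ffun T -> 'I_n}) : {ffun T -> 'I_n} :=
  [ffun y => if y \in R then swp a b (f y) else f y].

Lemma phiK (T : finType) n (R : {set T}) (a b : 'I_n) : involutive (phi R a b).
Proof. by move=> f; apply/ffunP => y; rewrite !ffunE; case: (y \in R); rewrite ?swpK. Qed.

Lemma GS (T : finType) n (x : T) (R : {set T}) (Cs : {set 'I_n}) (c0 : 'I_n)
  (P : pred {ffun T -> 'I_n}) :
  x \in R -> c0 \in Cs -> (forall f, P f -> f x \in Cs) ->
  (forall c f, c \in Cs -> P f -> P (phi R c0 c f)) ->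
  #|[set f | P f]| = #|Cs| * #|[set f | P f && (f x == c0)]|.
Proof.
move=> xR c0C PC Pinv.
have eqc : forall c, c \in Cs -> #|[set f | P f && (f x == c)]| = #|[set f | P f && (f x == c0)]|.
  move=> c cC; apply: (card_bij_in (g := phi R c0 c) (h := phi R c0 c)).
  - move=> f; rewrite !inE => /andP [Pf /eqP fx]; rewrite Pinv //= ffunE xR fx swpR eqxx.
    by [].
  - move=> f; rewrite !inE => /andP [Pf /eqP fx]; rewrite Pinv //= ffunE xR fx swpL eqxx.
    by [].
  - by move=> f _; rewrite phiK.
  - by move=> f _; rewrite phiK.
rewrite -sum1_card (partition_big (fun f : {ffun T -> 'I_n} => f x) (fun c => c \in Cs)) /=; last first.
  by move=> f; rewrite inE => /PC.
rewrite -sum_nat_const; apply: eq_bigr => c cC.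
rewrite -(eqc c cC) -sum1_card; apply: eq_bigl => f; by rewrite !inE.
Qed.

Definition zeros (T : finType) n (f : {ffun T -> 'I_n.+1}) : {set T} := [set x | f x == ord0].

Lemma card_zeros (T : finType) k (Z : {set T}) :
  #|[set f : {ffun T -> 'I_k.+1} | zeros f == Z]| = k ^ #|~: Z|.
Proof.
pose F := fun x : T => if x \in Z then pred1 (ord0 : 'I_k.+1) else predC1 ord0.
have -> : [set f : {ffun T -> 'I_k.+1} | zeros f == Z] = [set f in family F].
  apply/setP => f; rewrite !inE; apply/eqP/familyP.
    move=> eZ x; rewrite /F -eZ inE; case: (eqVneq (f x) ord0) => [->|ne] /=.
      by rewrite inE.
    by rewrite inE.
  move=> H; apply/setP => x; rewrite inE; have := H x; rewrite /F.
  by case: (x \in Z) => /=; rewrite inE // => /negPf.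
rewrite cardsE card_family foldrE big_image /=.
rewrite (eq_bigr (fun x => if x \in Z then 1 else k)); last first.
  move=> x _; rewrite /F; case: (x \in Z).
    by rewrite card1.
  by rewrite cardC1 card_ord.
rewrite -[k ^ _]prod_nat_const [RHS]big_mkcond /=.
apply: eq_big => // x _; rewrite inE; by case: (x \in Z).
Qed.

Lemma powdec k m : k ^ m = (m == 0) + k * (m == 1) + k ^ 2 * (if (1 < m)%N then k ^ (m - 2) else 0).
Proof.
case: m => [|[|m]] //=; first by rewrite muln0 expn0 muln0.
  by rewrite muln1 expn1 muln0 addn0.
by rewrite muln0 add0n subSS subn1 /= -expnD add2n.
Qed.

Lemma ZL (T : finType) k (Q : pred {set T}) : exists m,
  #|[set f : {ffun T -> 'I_k.+1} | Q (zeros f)]| = Q setT + k * #|[set v | Q (~: [set v])]| + k ^ 2 * m.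
Proof.
have -> : #|[set f : {ffun T -> 'I_k.+1} | Q (zeros f)]| = \sum_(Z | Q Z) k ^ #|~: Z|.
  rewrite -sum1_card (partition_big (@zeros T k) Q) /=; last by move=> f; rewrite inE.
  apply: eq_bigr => Z QZ; rewrite -card_zeros -sum1_card; apply: eq_bigl => f.
  rewrite !inE; apply/andP/idP => [[] //|/eqP e]; by rewrite e QZ.
rewrite (eq_bigr _ (fun Z _ => powdec k #|~: Z|)) !big_split /= -!big_distrr /=.
eexists; congr (_ + _ + _).
  have ceq : forall Z : {set T}, (#|~: Z| == 0) = (Z == setT).
    move=> Z; rewrite cards_eq0; apply/eqP/eqP => [H|->]; last by rewrite setCT.
    by rewrite -(setCK Z) H setC0.
  case: (boolP (Q setT)) => QT.
    rewrite (bigD1 setT) //= ceq eqxx big1 // => Z /andP [_ nZ].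
    by rewrite ceq (negPf nZ).
  rewrite big1 // => Z QZ; rewrite ceq; case: eqP => // eZ.
  by move: QT; rewrite -eZ QZ.
congr (_ * _).
rewrite -big_mkcondr /= sum1_card.
transitivity #|[set Z : {set T} | Q Z && (#|~: Z| == 1)]|; first by apply: eq_card => Z; rewrite inE.
have -> : [set Z : {set T} | Q Z && (#|~: Z| == 1)] = [set ~: [set v] | v in [set v | Q (~: [set v])]].
  apply/setP => Z; rewrite inE; apply/andP/imsetP.
    case=> QZ /cards1P [x ex]; exists x; last by rewrite -ex setCK.
    by rewrite inE -ex setCK.
  case=> x; rewrite inE => Qx ->; by rewrite setCK cards1 Qx.
rewrite card_in_imset //.
by move=> x y _ _ /setC_inj /set1_inj.
Qed.

Lemma phi0 (T : finType) n (R : {set T}) (a b : 'I_n.+1) (f : {ffun T -> 'I_n.+1}) y :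
  a != ord0 -> b != ord0 -> (phi R a b f y == ord0) = (f y == ord0).
Proof.
move=> a0 b0; rewrite ffunE; case: ifP => // _.
by rewrite -{1}(swp_fix (c := ord0) (a := a) (b := b)) ?swp_eq // eq_sym.
Qed.

Lemma phi_nm (T : finType) n (R : {set T}) (a b : 'I_n) (f : {ffun T -> 'I_n}) (e : {set T}) :
  (e \subset R) \/ (forall y, y \in e -> y \notin R) -> nonmono (phi R a b f) e = nonmono f e.
Proof.
move=> H; apply: NMperm => x y xe ye; rewrite !ffunE.
case: H => [/subsetP H|H].
  by rewrite (H x xe) (H y ye) swp_eq.
by rewrite (negPf (H x xe)) (negPf (H y ye)).
Qed.

Definition Pk (T : finType) k (V V1 V2 : {set T}) (E : {set {set T}}) (w : T) (f : {ffun T -> 'I_k.+1}) :=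
  [&& fillb V w f, pT E f, f w == ord0,
       [exists x in V1 :\ w, f x != ord0] & [exists x in V2 :\ w, f x != ord0]].

Lemma INV (T : finType) k (V V1 V2 R : {set T}) (E : {set {set T}}) (w : T) (a b : 'I_k.+1)
  (f : {ffun T -> 'I_k.+1}) :
  a != ord0 -> b != ord0 ->
  (forall e, e \in E -> w \notin e -> (e \subset R) \/ (forall y, y \in e -> y \notin R)) ->
  Pk V V1 V2 E w f -> Pk V V1 V2 E w (phi R a b f) && (zeros (phi R a b f) == zeros f).
Proof.
move=> a0 b0 HE /and5P [fl pf fw e1 e2].
have z : forall y, (phi R a b f y == ord0) = (f y == ord0) by move=> y; rewrite phi0.
have gw : phi R a b f w == ord0 by rewrite z.
have zz : zeros (phi R a b f) = zeros f by apply/setP => y; rewrite !inE z.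
rewrite zz eqxx andbT; apply/and5P; split => //.
- apply/forallP => x; apply/implyP => xV.
  have fx : f x == ord0 by rewrite (eqP (implyP (forallP fl x) xV)).
  by rewrite (eqP gw); rewrite z.
- apply/forall_inP => e eE; have := forall_inP pf e eE.
  case: (boolP (w \in e)) => we.
    rewrite !(NMz _ we) (eqP gw) (eqP fw).
    by move=> /exists_inP [y ye ny]; apply/exists_inP; exists y => //; rewrite z.
  by rewrite phi_nm //; apply: HE.
- by move: e1 => /exists_inP [y ye ny]; apply/exists_inP; exists y => //; rewrite z.
- by move: e2 => /exists_inP [y ye ny]; apply/exists_inP; exists y => //; rewrite z.
Qed.

Lemma K2 (T : finType) k (V V1 V2 : {set T}) (E : {set {set T}}) (w : T) :
  V1 :&: V2 = [set w] -> (forall e, e \in E -> [|| w \in e, e \subset V1 | e \subset V2]) ->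
  (k ^ 2 %| #|[set f : {ffun T -> 'I_k.+1} | Pk V V1 V2 E w f]|)%N.
Proof.
move=> V12 tri.
case: k => [|k].
  rewrite (_ : #|_| = 0) ?dvdn0 //; apply/eqP; rewrite cards_eq0; apply/eqP/setP => f.
  rewrite !inE; apply/negP => /and5P [_ _ _ /exists_inP [x _]].
  by rewrite (ord1 (f x)) eqxx.
rewrite -sum1_card (partition_big (@zeros T k.+1) xpredT) //=.
apply: dvdn_sum => Z _.
set S := [set f : {ffun T -> 'I_k.+2} | Pk V V1 V2 E w f && (zeros f == Z)].
rewrite (_ : \sum_(i in _ | _) 1 = #|S|); last first.
  by rewrite -sum1_card; apply: eq_bigl => f; rewrite !inE.
case: (set_0Vmem S) => [->|[f0 f0S]]; first by rewrite cards0 dvdn0.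
move: (f0S); rewrite inE => /andP [/and5P [_ _ _ /exists_inP [x1 x1V1 nx1] /exists_inP [x2 x2V2 nx2]] /eqP zf0].
have nz : forall f x, f \in S -> f0 x != ord0 -> f x != ord0.
  move=> f x; rewrite inE => /andP [_ /eqP zf] nx; apply/negP => fx.
  have : x \in zeros f by rewrite inE fx.
  by rewrite zf -zf0 inE (negPf nx).
pose c0 : 'I_k.+2 := @Ordinal k.+2 1 isT.
have c00 : c0 != ord0 by [].
pose Cs : {set 'I_k.+2} := ~: [set ord0].
have cCs : #|Cs| = k.+1 by rewrite cardsC1 card_ord.
have c0C : c0 \in Cs by rewrite !inE.
have invS : forall (R : {set T}) c f, c \in Cs ->
  (forall e, e \in E -> w \notin e -> (e \subset R) \/ (forall y, y \in e -> y \notin R)) ->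
  f \in S -> phi R c0 c f \in S.
  move=> R c f; rewrite !inE => cC HE /andP [Pf /eqP zf].
  have /andP [-> /eqP ->] := INV c00 cC HE Pf; by rewrite zf eqxx.
have x1V2 : x1 \notin V2.
  apply/negP => x1in; move: x1V1; rewrite !inE => /andP [nw x1in1].
  have : x1 \in V1 :&: V2 by rewrite inE x1in1 x1in.
  by rewrite V12 inE (negPf nw).
have step1 := @GS _ _ x1 setT Cs c0 (fun f => f \in S) (in_setT x1) c0C.
rewrite (_ : [set f | f \in S] = S) in step1; last by apply/setP => f; rewrite inE.
rewrite step1; last first.
  - move=> c f cC fS; apply: invS => // e _ _; left; exact: subsetT.
  - by move=> f fS; rewrite !inE; apply: nz fS nx1.
rewrite cCs.
have x2R : x2 \in V2 by move: x2V2; rewrite inE => /andP [].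
have H1 : forall f, (f \in S) && (f x1 == c0) -> f x2 \in Cs.
  by move=> f /andP [fS _]; rewrite !inE; apply: nz fS nx2.
have H2 : forall c f, c \in Cs -> (f \in S) && (f x1 == c0) ->
   (phi V2 c0 c f \in S) && (phi V2 c0 c f x1 == c0).
  move=> c f cC /andP [fS fx1]; apply/andP; split.
    apply: invS => // e eE we; have := tri e eE; rewrite (negPf we) /= => /orP [eV1|eV2].
      right => y ye; apply/negP => yV2.
      have : y \in V1 :&: V2 by rewrite inE (subsetP eV1 y ye) yV2.
      by rewrite V12 inE => /eqP yw; move: we; rewrite -yw ye.
    by left.
  by rewrite ffunE (negPf x1V2).
have step2 := @GS _ _ x2 V2 Cs c0 (fun f => (f \in S) && (f x1 == c0)) x2R c0C H1 H2.
by rewrite step2 cCs mulnA mulnn dvdn_mulr.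
Qed.

Lemma NORM (T : finType) k (w : T) (Q : pred {ffun T -> 'I_k.+1}) :
  (forall f g : {ffun T -> 'I_k.+1}, (forall y z, (g y == g z) = (f y == f z)) -> Q g = Q f) ->
  #|[set f | Q f]| = k.+1 * #|[set f | Q f && (f w == ord0)]|.
Proof.
move=> HQ.
have := @GS _ _ w setT setT ord0 Q (in_setT w) (in_setT _) (fun f _ => in_setT _).
rewrite cardsT card_ord; apply.
move=> c f _ Qf; rewrite (HQ f) // => y z; by rewrite !ffunE !in_setT swp_eq.
Qed.

Lemma eqinv_main (T : finType) n (V V0 : {set T}) (E : {set {set T}}) (w : T) (f g : {ffun T -> 'I_n}) :
  (forall y z, (g y == g z) = (f y == f z)) ->
  [/\ fillb V w g = fillb V w f, pT E g = pT E f &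
      [forall x in V0, g x == g w] = [forall x in V0, f x == f w]].
Proof.
move=> H; split.
- by apply: eq_forallb => x; rewrite H.
- apply: eq_forallb => e; congr (_ ==> _); apply: NMperm => x y _ _; exact: H.
- by apply: eq_forallb => x; rewrite H.
Qed.

Lemma keyA (T : finType) k (V Va Vb : {set T}) (E : {set {set T}}) (w : T) :
  Va :&: Vb = [set w] -> (forall e, e \in E -> [|| w \in e, e \subset Va | e \subset Vb]) ->
  [exists e in E, (w \notin e) && (e \subset Va)] -> w \in Vb ->
  #|[set f : {ffun T -> 'I_k.+1} | fillb V w f && pT E f]| =
  #|[set f : {ffun T -> 'I_k.+1} | [&& fillb V w f, pT E f & [forall x in Vb, f x == f w]]]|
  + k.+1 * #|[set f : {ffun T -> 'I_k.+1} | Pk V Va Vb E w f]|.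
Proof.
move=> Vab tri /exists_inP [a aE /andP [wa aVa]] wVb.
set A := [set f : {ffun T -> 'I_k.+1} | fillb V w f && pT E f].
set Bs := [set f : {ffun T -> 'I_k.+1} | [forall x in Vb, f x == f w]].
rewrite -(cardsID Bs A); congr (_ + _).
  by apply: eq_card => f; rewrite !inE andbA.
have -> : A :\: Bs = [set f | [&& fillb V w f, pT E f & ~~ [forall x in Vb, f x == f w]]].
  by apply/setP => f; rewrite !inE andbC andbA.
rewrite (@NORM _ _ w); last first.
  move=> f g H; have [-> -> ->] := eqinv_main V Vb E w H; by [].
congr (_ * _); apply: eq_card => f; rewrite !inE /Pk.
apply/idP/idP.
  case/andP => /and3P [fl pf nfa] fw; rewrite fl pf fw /=; apply/andP; split.
    have := forall_inP pf a aE; case/exists_inP => x xa /exists_inP [y ya nxy].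
    apply/exists_inP; case: (eqVneq (f x) ord0) => fx.
      exists y; last by rewrite -fx eq_sym.
      rewrite !inE (subsetP aVa) // andbT; by apply/eqP => yw; move: wa; rewrite -yw ya.
    exists x => //; rewrite !inE (subsetP aVa) // andbT; by apply/eqP => yw; move: wa; rewrite -yw xa.
  move: nfa; rewrite negb_forall_in => /exists_inP [x xVb nx]; apply/exists_inP; exists x.
    by rewrite !inE xVb andbT; apply/eqP => xw; move: nx; rewrite xw eqxx.
  by rewrite -(eqP fw).
case/and5P => fl pf fw _ /exists_inP [x /setD1P [xw xVb] nx].
rewrite fl pf fw /= andbT; apply/forall_inP => H.
by move: nx; rewrite (eqP (H x xVb)) fw.
Qed.

Lemma sub_setC1 (T : finType) (e : {set T}) v : (e \subset ~: [set v]) = (v \notin e).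
Proof.
apply/subsetP/idP => [H|nv x xe].
  by apply/negP => /H; rewrite !inE eqxx.
by rewrite !inE; apply/eqP => xv; move: nv; rewrite -xv xe.
Qed.

Lemma part1 (T : finType) (V : {set T}) (E : {set {set T}}) (u : T) e0 :
  (forall e, e \in E -> e \subset V) -> e0 \in E -> u \in Fcore V E ->
  forall k, exists m, chrom_count V E k.+1 = k * (#|Fcore V E| - 1) + k ^ 2 * m.
Proof.
move=> EV e0E uF k.
have uV : u \in V by move: uF; rewrite inE => /andP [].
have uE : forall e, e \in E -> u \in e by move: uF; rewrite inE => /andP [_ /forall_inP].
rewrite (@C0 _ _ _ _ k.+1 uV EV).
rewrite (@NORM _ _ u); last by move=> f g H; have [-> -> _] := eqinv_main V V E u H.
pose Qf (Z : {set T}) := [&& u \in Z, ~: V \subset Z & [forall e in E, ~~ (e \subset Z)]].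
have -> : #|[set f : {ffun T -> 'I_k.+1} | (fillb V u f && pT E f) && (f u == ord0)]|
          = #|[set f : {ffun T -> 'I_k.+1} | Qf (zeros f)]|.
  apply: eq_card => f; rewrite !inE /Qf; apply/idP/idP.
    case/andP => /andP [fl pf] fu; apply/and3P; split.
    - by rewrite inE.
    - apply/subsetP => x; rewrite !inE => xV; by rewrite -(eqP fu) (implyP (forallP fl x) xV).
    - apply/forall_inP => e eE; have := forall_inP pf e eE.
      rewrite (NMz _ (uE e eE)) => /exists_inP [y ye ny]; apply/negP => /subsetP sub.
      by move: (sub y ye); rewrite inE -(eqP fu) (negPf ny).
  case/and3P => uZ VZ EZ.
  have fu : f u == ord0 by move: uZ; rewrite inE.
  rewrite fu andbT; apply/andP; split.
    apply/forallP => x; apply/implyP => xV.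
    have : x \in zeros f by apply: (subsetP VZ); rewrite inE.
    by rewrite inE (eqP fu).
  apply/forall_inP => e eE; rewrite (NMz _ (uE e eE)).
  have /subsetPn [y ye ny] := forall_inP EZ e eE.
  by apply/exists_inP; exists y => //; rewrite (eqP fu); move: ny; rewrite inE.
have [m ->] := ZL k Qf.
have -> : Qf setT = false.
  rewrite /Qf; apply/negP => /and3P [_ _ /forall_inP H].
  by have := H e0 e0E; rewrite subsetT.
have -> : [set v | Qf (~: [set v])] = Fcore V E :\ u.
  apply/setP => v; rewrite /Qf !inE setCS sub1set.
  have -> : [forall e in E, ~~ (e \subset ~: [set v])] = [forall e in E, v \in e].
    by apply: eq_forallb => e; rewrite sub_setC1 negbK.
  by rewrite eq_sym.
rewrite (cardsD1 u (Fcore V E)) uF add1n subn1 /=.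
exists (#|Fcore V E :\ u| + k.+1 * m); nia.
Qed.

Local Open Scope ring_scope.

Lemma natSm1 (k : nat) : (k.+1%:R - 1 : int) = k%:R.
Proof. by rewrite -addn1 natrD addrK. Qed.

Lemma L0 (p : {poly int}) : (('X - 1) ^+ 2 %| p) <-> (forall k : nat, ((k%:Z) ^+ 2 %| p.[(k.+1)%:R])%Z).
Proof.
have mon : ('X - 1 : {poly int}) ^+ 2 \is monic by rewrite monic_exp // -polyC1 monicXsubC.
split.
  move/(Pdiv.IdomainMonic.dvdpP mon) => [qq ->] k.
  by rewrite hornerM horner_exp -polyC1 hornerXsubC natSm1 natz dvdz_mull.
move=> H.
have H0 := H 0%N.
rewrite expr0n /= dvd0z in H0.
have /factor_theorem [q Hq] : root p 1 by rewrite /root.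
have Hk : forall k : nat, (0 < k)%N -> (k%:Z %| q.[k.+1%:R])%Z.
  move=> k k0; have := H k.
  rewrite Hq hornerM hornerXsubC natSm1 natz expr2 dvdz_mul2r //.
  by rewrite -lt0n.
have /factor_theorem [r Hr] : root (q - q.[1]%:P) 1 by rewrite /root hornerD hornerN hornerC subrr.
have Hk2 : forall k : nat, (0 < k)%N -> (k%:Z %| q.[1])%Z.
  move=> k k0.
  have E1 : q.[1] = q.[k.+1%:R] - (r.[k.+1%:R] * k%:R).
    have := congr1 (fun s => s.[k.+1%:R]) Hr.
    rewrite /= hornerD hornerN hornerC hornerM hornerXsubC natSm1 => <-.
    by rewrite opprB addrC subrK.
  by rewrite E1 rpredB ?Hk // dvdz_mull // natz.
have q1 : q.[1] = 0.
  apply/eqP; apply/negPn/negP => nz.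
  have := Hk2 `|q.[1]|.+1%N isT.
  rewrite dvdzE /= => /dvdn_leq.
  by rewrite absz_gt0 nz ltnn => /(_ isT).
have /factor_theorem [s Hs] : root q 1 by rewrite /root q1.
rewrite Hq Hs -mulrA -expr2 polyC1.
exact: dvdp_mulIr.
Qed.

Lemma Ldiv (p : {poly int}) (c : nat -> nat) :
  (forall k, p.[k.+1%:R] = (c k)%:R) ->
  (('X - 1) ^+ 2 %| p <-> forall k, (k ^ 2 %| c k)%N).
Proof.
move=> Hc; split.
  by move/L0 => H k; have := H k; rewrite Hc dvdzE abszX natz.
by move=> H; apply/L0 => k; rewrite Hc dvdzE abszX natz; apply: H.
Qed.

Unset Implicit Arguments.

Theorem theorem4 (T : finType) (V : {set T}) (E : {set {set T}}) :
  hypergraph V E -> hconnected V E -> sperner E -> (2 <= #|E|)%N ->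
  (Fcore V E != set0 ->
     forall p : {poly int}, is_chrom_poly V E p ->
       (('X - 1) ^+ 2 %| p <-> #|Fcore V E| = 1%N))
  /\
  (Fcore V E = set0 ->
     forall (w : T) (V1 V2 : {set T}),
       V1 \proper V -> V2 \proper V -> V1 :|: V2 = V -> V1 :&: V2 = [set w] ->
       (forall e, e \in E -> [|| w \in e, e \subset V1 | e \subset V2]) ->
       forall p q1 q2 : {poly int},
         is_chrom_poly V E p ->
         is_chrom_poly (contr_V V V1) (contr_E E V1) q1 ->
         is_chrom_poly (contr_V V V2) (contr_E E V2) q2 ->
         (('X - 1) ^+ 2 %| p <->
            (~~ indep V E V1 /\ ~~ indep V E V2)
            \/ (indep V E V1 /\ ~~ indep V E V2 /\ ('X - 1) ^+ 2 %| q1)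
            \/ (indep V E V2 /\ ~~ indep V E V1 /\ ('X - 1) ^+ 2 %| q2))).
Proof.
move=> hyp _ _ E2.
have EV : forall e, e \in E -> e \subset V by move=> e /hyp [].
have [e0 e0E] : exists e0, e0 \in E.
  have : (0 < #|E|)%N by apply: leq_trans E2.
  by case/card_gt0P => x xE; exists x.
split.
  move=> F0 p Hp.
  have [u uF] := set0Pn _ F0.
  have cnt := part1 EV e0E uF.
  have Hc : forall k : nat, p.[k.+1%:R] = (chrom_count V E k.+1)%:R by move=> k; apply: Hp.
  have F1 : (0 < #|Fcore V E|)%N by apply/card_gt0P; exists u.
  split.
    move/(Ldiv Hc) => H.
    case: (posnP (#|Fcore V E| - 1)) => [d0|dpos]; first by apply/eqP; rewrite eqn_leq -subn_eq0 d0 F1.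
    exfalso; set d := (#|Fcore V E| - 1)%N in dpos.
    have [m Hm] := cnt d.+1.
    have := H d.+1; rewrite Hm dvdn_addl; last exact: dvdn_mulr (dvdnn _).
    rewrite -mulnn dvdn_pmul2l //.
    by move/(dvdn_leq dpos); rewrite ltnn.
  move=> F1e; apply/(Ldiv Hc) => k; have [m ->] := cnt k.
  by rewrite F1e subnn muln0 add0n dvdn_mulr.
move=> F0 w V1 V2 pV1 pV2 U12 I12 tri p q1 q2 Hp Hq1 Hq2.
have wI : w \in V1 :&: V2 by rewrite I12 set11.
have wV1 : w \in V1 by move: wI; rewrite inE => /andP [].
have wV2 : w \in V2 by move: wI; rewrite inE => /andP [].
have V1V := proper_sub pV1; have V2V := proper_sub pV2.
have wV : w \in V := subsetP V1V w wV1.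
pose cH k := #|[set f : {ffun T -> 'I_k.+1} | fillb V w f && pT E f]|.
pose cC (V0 : {set T}) k :=
  #|[set f : {ffun T -> 'I_k.+1} | [&& fillb V w f, pT E f & [forall x in V0, f x == f w]]]|.
have pdiv : ('X - 1) ^+ 2 %| p <-> forall k, (k ^ 2 %| cH k)%N.
  apply: Ldiv => k; rewrite Hp // /cH.
  by rewrite (@C0 _ _ _ _ k.+1 wV EV).
have q1div : ('X - 1) ^+ 2 %| q1 <-> forall k, (k ^ 2 %| cC V1 k)%N.
  apply: Ldiv => k; rewrite Hq1 // /cC.
  by rewrite (@Ccontr _ _ _ _ w k.+1 wV1 V1V EV).
have q2div : ('X - 1) ^+ 2 %| q2 <-> forall k, (k ^ 2 %| cC V2 k)%N.
  apply: Ldiv => k; rewrite Hq2 // /cC.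
  by rewrite (@Ccontr _ _ _ _ w k.+1 wV2 V2V EV).
have zeroC : forall V0 : {set T}, V0 \subset V -> ~~ indep V E V0 -> forall k, cC V0 k = 0%N.
  move=> V0 V0V ni k; apply/eqP; rewrite cards_eq0; apply/eqP/setP => f; rewrite !inE.
  move: ni; rewrite /indep V0V /= negb_forall_in => /exists_inP [e eE /negbNE eV0].
  apply/negP => /and3P [_ pf cf].
  have := forall_inP pf e eE; case/exists_inP => x xe /exists_inP [y ye].
  by rewrite (eqP (forall_inP cf x (subsetP eV0 x xe))) (eqP (forall_inP cf y (subsetP eV0 y ye))) eqxx.
have tri' : forall e, e \in E -> [|| w \in e, e \subset V2 | e \subset V1].
  move=> e eE; have := tri e eE; by case/or3P => ->; rewrite ?orbT.
have I21 : V2 :&: V1 = [set w] by rewrite setIC.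
have nI : forall V0 : {set T}, [exists e in E, (w \notin e) && (e \subset V0)] -> ~~ indep V E V0.
  move=> V0 /exists_inP [e eE /andP [_ eV0]]; rewrite /indep negb_and; apply/orP; right.
  by rewrite negb_forall_in; apply/exists_inP; exists e => //; rewrite eV0.
case: (boolP [exists e in E, (w \notin e) && (e \subset V1)]) => A1.
  have rel : forall k, (k ^ 2 %| cH k)%N = (k ^ 2 %| cC V2 k)%N.
    move=> k; rewrite /cH (keyA k V I12 tri A1 wV2) dvdn_addl //.
    by apply: dvdn_mull; apply: K2.
  have nI1 := nI V1 A1.
  split.
    move/pdiv => H.
    case: (boolP (indep V E V2)) => i2; last by left.
    right; right; split => //; split => //; apply/q2div => k; by rewrite -rel.
  move=> R; apply/pdiv => k; rewrite rel.
  case: (boolP (indep V E V2)) => i2; last by rewrite zeroC ?dvdn0.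
  case: R => [[_ ni2]|[[i1 _]|[_ [_ /q2div H]]]] //.
  - by move: ni2; rewrite i2.
  - by move: nI1; rewrite i1.
case: (boolP [exists e in E, (w \notin e) && (e \subset V2)]) => A2.
  have rel : forall k, (k ^ 2 %| cH k)%N = (k ^ 2 %| cC V1 k)%N.
    move=> k; rewrite /cH (keyA k V I21 tri' A2 wV1) dvdn_addl //.
    by apply: dvdn_mull; apply: K2.
  have nI2 := nI V2 A2.
  split.
    move/pdiv => H.
    case: (boolP (indep V E V1)) => i1; last by left.
    right; left; split => //; split => //; apply/q1div => k; by rewrite -rel.
  move=> R; apply/pdiv => k; rewrite rel.
  case: (boolP (indep V E V1)) => i1; last by rewrite zeroC ?dvdn0.
  case: R => [[ni1 _]|[[_ [_ /q1div H]]|[i2 _]]] //.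
  - by move: ni1; rewrite i1.
  - by move: nI2; rewrite i2.
exfalso.
have : w \in Fcore V E.
  rewrite inE wV /=; apply/forall_inP => e eE.
  case/or3P: (tri e eE) => // eV; apply/negPn/negP => we.
  - by move: A1; rewrite negb_exists_in => /forall_inP /(_ e eE); rewrite we eV.
  - by move: A2; rewrite negb_exists_in => /forall_inP /(_ e eE); rewrite we eV.
by rewrite F0 inE.
Qed.

Print Assumptions theorem4.
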